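(* Let $n\geq2$ be finite. If $\mathfrak A\in SA_n$ is completely representable, then so is its minimal completion $\mathrm{Cm}\,\mathrm{At}\mathfrak A$.
   Context: $SA_n=\mathbf{Mod}(\Sigma'_n)$, where $\Sigma'_n$ (signature $\wedge,-,s^i_j,s_{ij}$, $i\neq j<n$) consists of the Boolean axioms, equations saying each $s^i_j,s_{ij}$ is a Boolean endomorphism, and $t_1(x)=t_2(x)$ for all words $t_1,t_2$ with the same associated map in ${}^nn$ (words map to compositions of the transpositions $[i,j]$ and replacements $[i/j]$, where $[i/j]$ sends $i$ to $j$ and fixes the rest). A completely representable algebra is atomic; for atomic $\mathfrak A$ the minimal completion is the complex algebra of its atom structure: universe $\mathcal P(\mathrm{At}\mathfrak A)$ with Boolean set operations and, for each unary operator $f$, $f(Y)=\{a\in\mathrm{At}\mathfrak A:\exists b\in Y,\ a\leq f(b)\}$; $\mathfrak A$ embeds in it via $x\mapsto\{a\in\mathrm{At}\mathfrak A:a\le x\}$. $\mathfrak B$ is completely representable if there is an injective homomorphism $g:\mathfrak B\to\wp(D)$ with $D$ dipermutable (closed under $s\mapsto s\circ[i/j]$ and $s\mapsto s\circ[i,j]$) and $g(\prod Y)=\bigcap g[Y]$ whenever $\prod Y$ exists; $\wp(D)$ carries $\cap$, complement relative to $D$, $S^i_j(X)=\{q\in D:q\circ[i/j]\in X\}$, $S_{ij}(X)=\{q\in D:q\circ[i,j]\in X\}$. *)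

(* Defs.v *)
From mathcomp Require Import all_boot.
Set Implicit Arguments. Unset Strict Implicit. Unset Printing Implicit Defensive.

(* sub i j  is s^i_j (associated map [i/j]),  swp i j  is s_ij (map [i,j]).
   The operations are only meaningful for i <> j; all axioms and all
   homomorphism conditions below only mention i <> j. *)
Record sa_sig (n : nat) := SaSig {
  carrier :> Type;
  meet : carrier -> carrier -> carrier;
  compl : carrier -> carrier;
  sub : 'I_n -> 'I_n -> carrier -> carrier;
  swp : 'I_n -> 'I_n -> carrier -> carrier }.
Arguments meet {n} s _ _.
Arguments compl {n} s _.
Arguments sub {n} s _ _ _.
Arguments swp {n} s _ _ _.

Section Sig.
Variables (n : nat) (A : sa_sig n).

Definition join (x y : A) : A := compl A (meet A (compl A x) (compl A y)).
Definition le (x y : A) : Prop := meet A x y = x.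

Definition boolean_axioms : Prop :=
  (forall x y : A, meet A x y = meet A y x) /\
  (forall x y z : A, meet A x (meet A y z) = meet A (meet A x y) z) /\
  (forall x y : A, join x y = join y x) /\
  (forall x y z : A, join x (join y z) = join (join x y) z) /\
  (forall x y : A, meet A x (join x y) = x) /\
  (forall x y : A, join x (meet A x y) = x) /\
  (forall x y z : A, meet A x (join y z) = join (meet A x y) (meet A x z)) /\
  (forall x y : A, meet A x (compl A x) = meet A y (compl A y)) /\
  (forall x y : A, join x (compl A x) = join y (compl A y)).

Definition bool_endo (f : A -> A) : Prop :=
  (forall x y, f (meet A x y) = meet A (f x) (f y)) /\
  (forall x, f (compl A x) = compl A (f x)).
End Sig.

Definition repl n (i j : 'I_n) (k : 'I_n) : 'I_n := if k == i then j else k.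
Definition transp n (i j : 'I_n) (k : 'I_n) : 'I_n :=
  if k == i then j else if k == j then i else k.

(* generators: (true, i, j) is s_ij, (false, i, j) is s^i_j *)
Definition gen n := (bool * 'I_n * 'I_n)%type.
Definition valid_gen n (g : gen n) : bool := g.1.2 != g.2.
Definition gen_map n (g : gen n) : 'I_n -> 'I_n :=
  if g.1.1 then transp g.1.2 g.2 else repl g.1.2 g.2.
Definition gen_op n (A : sa_sig n) (g : gen n) : A -> A :=
  if g.1.1 then swp A g.1.2 g.2 else sub A g.1.2 g.2.

Arguments gen_op {n} A g _.

(* word [:: g1; ...; gk] : x |-> g1 (... (gk x)), with map g1 o ... o gk *)
Definition word_map n (w : seq (gen n)) : 'I_n -> 'I_n :=
  foldr (fun g m => gen_map g \o m) id w.
Definition apply_word n (A : sa_sig n) (w : seq (gen n)) (x : A) : A :=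
  foldr (fun g y => gen_op A g y) x w.
Arguments apply_word {n} A w x.

Definition SA_axioms n (A : sa_sig n) : Prop :=
  boolean_axioms A /\
  (forall i j : 'I_n, i != j -> bool_endo (sub A i j)) /\
  (forall i j : 'I_n, i != j -> bool_endo (swp A i j)) /\
  (forall w1 w2 : seq (gen n), all (@valid_gen n) w1 -> all (@valid_gen n) w2 ->
     (forall k, word_map w1 k = word_map w2 k) ->
     forall x : A, apply_word A w1 x = apply_word A w2 x).

Definition dipermutable n (U : Type) (D : ('I_n -> U) -> Prop) : Prop :=
  forall s, D s -> forall i j : 'I_n, i != j ->
    D (s \o repl i j) /\ D (s \o transp i j).

Definition is_glb n (B : sa_sig n) (Y : B -> Prop) (p : B) : Prop :=
  (forall y, Y y -> le p y) /\ (forall z, (forall y, Y y -> le z y) -> le z p).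

(* g : B -> wp(D) is an injective homomorphism into the full set algebra on D
   (sets compared extensionally), preserving all existing infima. *)
Definition completely_representable n (B : sa_sig n) : Prop :=
  exists (U : Type) (D : ('I_n -> U) -> Prop) (g : B -> ('I_n -> U) -> Prop),
    dipermutable D /\
    (forall b q, g b q -> D q) /\
    (forall b c, (forall q, g b q <-> g c q) -> b = c) /\
    (forall b c q, g (meet B b c) q <-> g b q /\ g c q) /\
    (forall b q, g (compl B b) q <-> D q /\ ~ g b q) /\
    (forall i j : 'I_n, i != j -> forall b q,
        g (sub B i j b) q <-> D q /\ g b (q \o repl i j)) /\
    (forall i j : 'I_n, i != j -> forall b q,
        g (swp B i j b) q <-> D q /\ g b (q \o transp i j)) /\
    (forall (Y : B -> Prop) (p : B), is_glb Y p ->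
        forall q, g p q <-> D q /\ (forall y, Y y -> g y q)).

Definition zero n (A : sa_sig n) (x : A) : A := meet A x (compl A x).
Definition is_atom n (A : sa_sig n) (a : A) : Prop :=
  (forall x : A, a <> zero x) /\
  (forall x : A, le x a -> x = zero a \/ x = a).

Definition At n (A : sa_sig n) := {a : A | is_atom a}.

Definition cm_op n (A : sa_sig n) (f : A -> A) (Y : At A -> Prop) : At A -> Prop :=
  fun a => exists b : At A, Y b /\ le (proj1_sig a) (f (proj1_sig b)).

Definition Cm_At n (A : sa_sig n) : sa_sig n :=
  @SaSig n (At A -> Prop)
    (fun Y Z a => Y a /\ Z a)
    (fun Y a => ~ Y a)
    (fun i j => cm_op (sub A i j))
    (fun i j => cm_op (swp A i j)).

(* Main.v *)
Require Import Defs.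
From mathcomp Require Import all_boot.
From Stdlib Require Import Classical FunctionalExtensionality PropExtensionality ProofIrrelevance.

Theorem theorem4p20 (n : nat) (hn : 2 <= n) (A : sa_sig n) :
  SA_axioms A -> completely_representable A -> completely_representable (Cm_At A).
Proof.
intros _ [U [D [f [Hdp [HD [Hinj [Hm [Hc [Hs [Hw Hglb]]]]]]]]]].
assert (f0 : forall x q, ~ f (zero x) q).
{ intros x q H. unfold zero in H. apply Hm in H as [H1 H2]. apply Hc in H2. tauto. }
assert (lesub : forall x y q, le x y -> f x q -> f y q).
{ intros x y q Hle H. unfold le in Hle. rewrite <- Hle in H. apply Hm in H. tauto. }
assert (sub_le : forall x y, (forall q, f x q -> f y q) -> le x y).
{ intros x y H. unfold le. apply Hinj. intro q. rewrite Hm. split; [tauto| intro; split; auto]. }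
assert (empty_eq : forall x y, (forall q, ~ f x q) -> x = zero y).
{ intros x y H. apply Hinj. intro q. split; intro H'.
  - exfalso; eapply H; eauto.
  - exfalso; eapply f0; eauto. }
assert (atom_ne : forall a, is_atom a -> exists q, f a q).
{ intros a [Ha _]. apply NNPP. intro Hn. apply (Ha a). apply empty_eq. intros q Hq. apply Hn. eauto. }
assert (atom_le : forall a s q, is_atom a -> f a q -> f s q -> le a s).
{ intros a s q Ha Hq Hsq. destruct (proj2 Ha (meet A a s)) as [E|E].
  - apply sub_le. intros q' Hq'. apply Hm in Hq'. tauto.
  - exfalso. apply (f0 a q). rewrite <- E. apply Hm. auto.
  - exact E. }
assert (atom_eq : forall a b q, is_atom a -> is_atom b -> f a q -> f b q -> a = b).
{ intros a b q Ha Hb Hqa Hqb.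
  pose proof (atom_le a b q Ha Hqa Hqb) as E1.
  pose proof (atom_le b a q Hb Hqb Hqa) as E2.
  unfold le in E1, E2.
  rewrite <- E1, <- E2. apply Hinj. intro q'. rewrite !Hm. tauto. }
assert (atom_ex : forall (x : A) q, D q -> exists a, is_atom a /\ f a q).
{ intros x q Dq. apply NNPP. intro Hno.
  assert (G : is_glb (fun c => f c q) (zero x)).
  { split.
    - intros y _. apply sub_le. intros q' H'. exfalso. eapply f0; eauto.
    - intros z Hz. apply sub_le. intros q' Hq'. exfalso.
      destruct (classic (f z q)) as [Hzq|Hzq].
      + apply Hno. exists z. split; auto. split.
        * intros x0 E. apply (f0 x0 q). rewrite <- E. auto.
        * intros x0 Hle. destruct (classic (f x0 q)) as [Hx|Hx].
          -- right. apply Hinj. intro q0. split.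
             ++ apply lesub; auto.
             ++ apply lesub; apply Hz; auto.
          -- left. apply empty_eq. intros q0 Hq0.
             assert (Hcx : f (compl A x0) q) by (apply Hc; auto).
             pose proof (Hz _ Hcx) as Hle2.
             pose proof (lesub _ _ _ Hle2 (lesub _ _ _ Hle Hq0)) as H3.
             apply Hc in H3. tauto.
      + assert (Hcz : f (compl A z) q) by (apply Hc; auto).
        pose proof (lesub _ _ _ (Hz _ Hcz) Hq') as H3. apply Hc in H3. tauto. }
  apply (f0 x q). apply (proj2 (Hglb _ _ G q)). split; auto. }
assert (atEq : forall (a b : At A) q, f (proj1_sig a) q -> f (proj1_sig b) q -> a = b).
{ intros [a Ha] [b Hb] q; simpl; intros H1 H2.
  assert (a = b) by (eapply atom_eq; eauto). subst b. f_equal. apply proof_irrelevance. }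
exists U. exists (fun q => exists a : At A, f (proj1_sig a) q).
exists (fun Y q => exists a : At A, Y a /\ f (proj1_sig a) q).
split; [|split; [|split; [|split; [|split; [|split; [|split]]]]]].
- intros s [a Ha] i j ij. destruct (Hdp s (HD _ _ Ha) i j ij) as [D1 D2]. split.
  + destruct (atom_ex (proj1_sig a) _ D1) as [b [Hb Hfb]]. exists (exist _ b Hb); auto.
  + destruct (atom_ex (proj1_sig a) _ D2) as [b [Hb Hfb]]. exists (exist _ b Hb); auto.
- intros Y q [a [_ H]]. exists a; auto.
- intros Y Z H. apply functional_extensionality; intro a; apply propositional_extensionality.
  destruct (atom_ne _ (proj2_sig a)) as [q Hq].
  split; intro Ya.
  + destruct (proj1 (H q) (ex_intro _ a (conj Ya Hq))) as [b [Zb Hb]].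
    rewrite (atEq a b q Hq Hb); auto.
  + destruct (proj2 (H q) (ex_intro _ a (conj Ya Hq))) as [b [Zb Hb]].
    rewrite (atEq a b q Hq Hb); auto.
- intros Y Z q; simpl. split.
  + intros [a [[Ya Za] Hq]]. split; exists a; auto.
  + intros [[a [Ya Ha]] [b [Zb Hb]]]. rewrite (atEq a b q Ha Hb) in Ya. exists b; auto.
- intros Y q; simpl. split.
  + intros [a [Na Ha]]. split; [exists a; auto|].
    intros [b [Yb Hb]]. apply Na. rewrite (atEq a b q Ha Hb); auto.
  + intros [[a Ha] Hn]. exists a; split; auto. intro Ya; apply Hn; exists a; auto.
- intros i j ij Y q. simpl. unfold cm_op. split.
  + intros [a [[b [Yb Hle]] Hq]].
    pose proof (lesub _ _ _ Hle Hq) as Hs1. apply (Hs i j ij) in Hs1 as [Dq Hb].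
    split; [exists a; auto | exists b; auto].
  + intros [[a Ha] [b [Yb Hb]]]. exists a. split; auto. exists b. split; auto.
    apply atom_le with q; auto; [exact (proj2_sig a) | apply (Hs i j ij); split; [eapply HD; eauto | exact Hb]].
- intros i j ij Y q. simpl. unfold cm_op. split.
  + intros [a [[b [Yb Hle]] Hq]].
    pose proof (lesub _ _ _ Hle Hq) as Hs1. apply (Hw i j ij) in Hs1 as [Dq Hb].
    split; [exists a; auto | exists b; auto].
  + intros [[a Ha] [b [Yb Hb]]]. exists a. split; auto. exists b. split; auto.
    apply atom_le with q; auto; [exact (proj2_sig a) | apply (Hw i j ij); split; [eapply HD; eauto | exact Hb]].
- intros Y p [H1 H2] q.
  assert (Pe : forall a, p a <-> forall y, Y y -> y a).
  { intro a; split.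
    - intros pa y Yy. specialize (H1 y Yy). unfold le in H1; simpl in H1.
      pose proof (f_equal (fun P => P a) H1) as E. simpl in E. rewrite <- E in pa. tauto.
    - intros Ha. set (z := (fun b => forall y, Y y -> y b) : Cm_At A).
      assert (Hz : le z p).
      { apply H2; intros y Yy; unfold le; simpl; apply functional_extensionality; intro b;
        apply propositional_extensionality; split; [tauto| intro zb; split; [exact zb | exact (zb y Yy)]]. }
      unfold le in Hz; simpl in Hz.
      pose proof (f_equal (fun P => P a) Hz) as E. simpl in E.
      assert (za : z a) by exact Ha. rewrite <- E in za. tauto. }
  split.
  + intros [a [pa Ha]]. split; [exists a; auto|]. intros y Yy; exists a; split; auto.
    apply Pe; auto.
  + intros [[a Ha] Hall]. exists a. split; auto. apply Pe. intros y Yy.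
    destruct (Hall y Yy) as [b [yb Hb]]. rewrite (atEq a b q Ha Hb). auto.
Qed.
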